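(* Let $\mathcal{S}\subseteq\mathbb{S}^{d-1}$ with $|\mathcal{S}|=n$, and let $\mathcal{D}$ be a (randomized) linear-space bucket data structure for the $(\alpha,\beta)$-ANN problem on $\mathcal{S}$ in which each point of $\mathcal{S}$ is stored in at most one bucket. Fix a query $q\in\mathbb{S}^{d-1}$ and suppose that each point of $\mathcal{S}\cap B(q,\alpha)$ lies in a bucket inspected by $q$ with probability $1-o(1)$, and that the expected number of points of $\mathcal{S}\setminus B(q,\beta)$ lying in buckets inspected by $q$ is at most $n^{\rho+o(1)}$. Let $\widehat{\mathrm{ans}}$ be the sum, over the buckets inspected by $q$, of the number of points stored in the bucket. Then with probability at least $2/3$, $$(1-o(1))|\mathcal{S}\cap B(q,\alpha)|\le\widehat{\mathrm{ans}}\le|\mathcal{S}\cap B(q,\beta)|+n^{\rho+o(1)}.$$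
   Context: $\mathbb{S}^{d-1}$ is the unit sphere in $\mathbb{R}^d$, $B(q,\alpha)=\{x\in\mathbb{S}^{d-1}:\langle q,x\rangle\ge\alpha\}$, $0\le\beta<\alpha<1$. A bucket data structure stores points of $\mathcal{S}$ in buckets (e.g. of a hash table); a query $q$ determines a set of buckets it inspects, and the $(\alpha,\beta)$-ANN query scans the points in these buckets. The counting version replaces each bucket by the number of points stored in it and returns the sum of these counts over the inspected buckets. Asymptotic notation is as $n\to\infty$. *)

(* Defs.v *)
From HB Require Import structures.
From mathcomp Require Import all_boot all_order all_algebra.
From mathcomp Require Import all_classical all_reals all_analysis.
Set Implicit Arguments. Unset Strict Implicit. Unset Printing Implicit Defensive.
Import Order.TTheory GRing.Theory Num.Theory.
Local Open Scope ring_scope.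

Definition dotp (R : realType) (d : nat) (x y : 'rV[R]_d) : R :=
  \sum_(i < d) x ord0 i * y ord0 i.

Definition on_sphere (R : realType) (d : nat) (x : 'rV[R]_d) : Prop :=
  dotp x x = 1.

(* Membership in the cap B(q,a) = {x in S^{d-1} : <q,x> >= a}
   (only used for points already known to lie on the sphere). *)
Definition in_cap (R : realType) (d : nat) (q : 'rV[R]_d) (a : R) (x : 'rV[R]_d) : bool :=
  a <= dotp q x.

Definition found (T B P : Type) (store : T -> P -> B -> Prop) (insp : T -> set B)
  (w : T) (p : P) : Prop :=
  exists b, store w p b /\ insp w b.

Definition bucket_count (T B P : Type) (store : T -> P -> B -> Prop) (S : seq P)
  (w : T) (b : B) : nat :=
  count (fun p => `[< store w p b >]) S.

Definition ans_hat (R : realType) (T : Type) (B : choiceType) (P : Type)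
  (store : T -> P -> B -> Prop) (insp : T -> set B) (S : seq P) (w : T) : \bar R :=
  (\esum_(b in insp w) ((bucket_count store S w b)%:R : R)%:E)%E.
Arguments ans_hat {R T B P} store insp S w.

(* Main.v *)
Require Import Defs.
From HB Require Import structures.
From mathcomp Require Import all_boot all_order all_algebra.
From mathcomp Require Import all_classical all_reals all_analysis.
From mathcomp Require Import zify lra measurable_realfun.
Import Order.TTheory GRing.Theory Num.Theory.
Import numFieldNormedType.Exports.
Local Open Scope classical_set_scope.
Local Open Scope ring_scope.

Lemma ans_hat_count (R : realType) (T : Type) (B : choiceType) (P : Type)
  (store : T -> P -> B -> Prop) (insp : T -> set B) (w : T) :
  (forall p b1 b2, store w p b1 -> store w p b2 -> b1 = b2) ->
  forall s : seq P,
  ans_hat (R:=R) store insp s w = ((count (fun p => `[< found store insp w p >]) s)%:R : R)%:E.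
Proof.
move=> uni; elim=> [|p s IH].
  rewrite /ans_hat /=; apply: esum1 => b _; by [].
rewrite /ans_hat /= natrD EFinD -IH /ans_hat.
under eq_esum => b _ do rewrite natrD EFinD.
rewrite esumD; last 2 first.
- by move=> b _; rewrite lee_fin.
- by move=> b _; rewrite lee_fin.
congr (_ + _).
have [[b0 [sb0 ib0]]|nf] := pselect (found store insp w p).
  rewrite asboolT; last by exists b0.
  transitivity (\esum_(b in insp w `&` [set b0]) ((`[< store w p b >])%:R : R)%:E)%E.
    rewrite esum_mkcondr; apply: eq_esum => b _.
    case: (boolP (b \in [set b0])) => // /negP hb.
    rewrite asboolF // => sb; apply: hb; rewrite inE; exact: uni sb sb0.
  rewrite (_ : insp w `&` [set b0] = [set b0]); last first.
    by apply/seteqP; split => [x [] //|x ->]; split.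
  by rewrite esum_set1 ?asboolT // lee_fin.
rewrite asboolF //; apply: esum1 => b ib.
by rewrite asboolF // => sb; apply: nf; exists b.
Qed.

Lemma count_split (P : Type) (c f : P -> bool) (s : seq P) :
  count c s = (count (fun p => c p && f p) s + count (fun p => c p && ~~ f p) s)%N.
Proof. elim: s => //= x s ->; case: (c x); case: (f x) => /=; lia. Qed.

Lemma count_le_sub (P : Type) (c f : P -> bool) (s : seq P) :
  (count (fun p => c p && f p) s <= count f s)%N.
Proof. elim: s => //= x s IH; case: (c x); case: (f x) => /=; lia. Qed.

Lemma count_le_add (P : Type) (c f : P -> bool) (s : seq P) :
  (count f s <= count c s + count (fun p => ~~ c p && f p) s)%N.
Proof. elim: s => //= x s IH; case: (c x); case: (f x) => /=; lia. Qed.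

Section prob.
Context d (T : measurableType d) (R : realType) (mu : probability T R).
Context (P : eqType) (found : T -> P -> Prop).

Definition evt (c : P -> bool) (b : bool) (p : P) : set T :=
  if c p then (if b then [set w | found w p] else ~` [set w | found w p]) else set0.

Lemma evt_indic c b p w :
  ((c p && (if b then `[< found w p >] else ~~ `[< found w p >]))%:R : R) = \1_(evt c b p) w.
Proof.
rewrite indicE /evt; case: (c p) => /=; last by rewrite in_set0.
case: b => /=; rewrite ?in_setC; case: (asboolP (found w p)) => h; by [rewrite mem_set | rewrite memNset].
Qed.

Lemma evt_meas c b p : measurable [set w | found w p] -> measurable (evt c b p).
Proof.
move=> m; rewrite /evt; case: (c p) => //; case: b => //; exact: measurableC.
Qed.

Lemma count_meas (c : P -> bool) (b : bool) (s : seq P) :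
  (forall p, p \in s -> c p -> measurable [set w | found w p]) ->
  measurable_fun setT (fun w => ((count (fun p => c p && (if b then `[< found w p >] else ~~ `[< found w p >])) s)%:R : R)).
Proof.
elim: s => [|x s IH] H /=.
  exact: measurable_cst.
under eq_fun => w do rewrite natrD.
apply: measurable_funD; last first.
  by apply: IH => p ps cp; apply: H => //; rewrite in_cons ps orbT.
under eq_fun => w do rewrite evt_indic.
apply: measurable_indic.
rewrite /evt; case cx: (c x) => //.
have m := H x (mem_head _ _) cx.
destruct b; [exact: m | exact: measurableC].
Qed.


Lemma count_int (c : P -> bool) (s : seq P) (e : R) :
  (forall p, p \in s -> c p -> measurable [set w | found w p]) ->
  (forall p, p \in s -> c p -> (mu (~` [set w | found w p]) <= e%:E)%E) ->
  (\int[mu]_w ((count (fun p => c p && ~~ `[< found w p >]) s)%:R : R)%:E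
     <= ((count c s)%:R * e)%:E)%E.
Proof.
elim: s => [|x s IH] Hm He /=.
  by rewrite integral0 mul0r.
have Hm' : forall p, p \in s -> c p -> measurable [set w | found w p].
  by move=> p ps cp; apply: Hm => //; rewrite in_cons ps orbT.
have He' : forall p, p \in s -> c p -> (mu (~` [set w | found w p]) <= e%:E)%E.
  by move=> p ps cp; apply: He => //; rewrite in_cons ps orbT.
under eq_integral => w _ do rewrite natrD EFinD.
rewrite ge0_integralD //; last 2 first.
- apply/measurable_EFinP.
  under eq_fun => w do rewrite (evt_indic c false).
  apply: measurable_indic; rewrite /evt; case cx: (c x) => //.
  by apply: measurableC; apply: Hm => //; exact: mem_head.
- by apply/measurable_EFinP; exact (count_meas c false s Hm').
rewrite natrD mulrDl EFinD leeD //; last exact: IH.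
under eq_integral => w _ do rewrite (evt_indic c false).
rewrite integral_indic //; last first.
  rewrite /evt; case cx: (c x) => //; apply: measurableC; apply: Hm => //; exact: mem_head.
rewrite setIT /evt; case cx: (c x).
  by rewrite mul1r; apply: He => //; exact: mem_head.
by rewrite measure0 mul0r.
Qed.

Lemma markov_R (g : T -> R) (mg : measurable_fun setT g) (a : R) : (forall w, 0 <= g w) -> 0 < a ->
  (a%:E * mu [set w | (a <= g w)%R] <= \int[mu]_w `|g w|%:E)%E.
Proof.
move=> g0 a0.
have mid : measurable_fun [set: \bar R] (@id (\bar R)) by [].
have := @le_integral_comp_abse _ T R mu setT measurableT (EFin \o g) a id mid.
move=> /(_ _ _ _ a0) H.
have -> : [set w | (a <= g w)%R] = setT `&` [set x | (a%:E <= `|(EFin \o g) x|)%E].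
  apply/seteqP; split => w /=.
    by move=> h; split => //; rewrite lee_fin ger0_norm.
  by case=> _; rewrite lee_fin ger0_norm.
apply: H => //; exact/measurable_EFinP.
Qed.
End prob.

Lemma cvg_eps' (R : realType) (eps : nat -> R) : eps n @[n --> \oo] --> 0 ->
  (6 * `|eps n| + harmonic n) @[n --> \oo] --> (0 : R).
Proof.
move=> he.
have h1 : `|eps n| @[n --> \oo] --> (0 : R).
  have := cvg_norm he; rewrite normr0; apply; exact: _.
have h2 : (6 * `|eps n|) @[n --> \oo] --> (0 : R).
  have := cvgM (cvg_cst (6 : R)) h1; rewrite mulr0; apply; exact: _.
have := cvgD h2 cvg_harmonic; rewrite addr0; apply; exact: _.
Qed.

Lemma cvg_ln6 (R : realType) : (ln (6 : R) / ln (n%:R : R)) @[n --> \oo] --> (0 : R).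
Proof.
apply/cvgrPdist_le => e e0.
have l6 : 0 < ln (6 : R) by rewrite ln_gt0 // ltr1n.
near=> n.
have hn : expR (ln 6 / e) < n%:R :> R by near: n; exact: nbhs_infty_gtr.
have n0 : 0 < n%:R :> R by apply: lt_trans hn; exact: expR_gt0.
have hl : ln 6 / e < ln (n%:R : R).
  rewrite -[X in X < _]expRK ltr_ln // ?posrE ?expR_gt0 //.
have lnpos : 0 < ln (n%:R : R) by apply: lt_trans hl; exact: divr_gt0.
rewrite sub0r normrN ger0_norm; last by apply: divr_ge0; exact: ltW.
by rewrite ler_pdivrMr // mulrC -ler_pdivrMr // ltW.
Unshelve. all: by end_near.
Qed.

Section fin.
Context d (T : measurableType d) (R : realType) (mu : probability T R).

Lemma markov_div (x : \bar R) (a b : R) : 0 < a -> (a%:E * x <= b%:E)%E -> (0 <= x)%E ->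
  (x <= (b / a)%:E)%E.
Proof.
move=> a0; case: x => [r| |] //=.
- by rewrite -EFinM !lee_fin => h _; rewrite ler_pdivlMr // mulrC.
- by rewrite gt0_muley ?lte_fin.
Qed.

Lemma final_step (A1 A2 G : set T) : measurable A1 -> measurable A2 -> measurable G ->
  ~` A1 `&` ~` A2 `<=` G -> (mu A1 <= (1/6)%:E)%E -> (mu A2 <= (1/6)%:E)%E ->
  ((2/3)%:E <= mu G)%E.
Proof.
move=> m1 m2 mG sub h1 h2.
have mU : measurable (A1 `|` A2) by exact: measurableU.
apply: (@le_trans _ _ (mu (~` (A1 `|` A2)))); last first.
  by apply: le_measure; rewrite ?inE //; [exact: measurableC | rewrite setCU].
rewrite probability_setC //.
have hU : (mu (A1 `|` A2) <= (1/3)%:E)%E.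
  apply: le_trans (measureU2 _ m1 m2) _.
  apply: le_trans (leeD h1 h2) _; rewrite -EFinD lee_fin; lra.
have hU0 : (0 <= mu (A1 `|` A2))%E by exact: measure_ge0.
move: hU hU0; case: (mu (A1 `|` A2)) => [r| |] //.
rewrite !lee_fin => hr _; lra.
Qed.
End fin.

Lemma one_n d (T : measurableType d) (R : realType) (mu : probability T R)
  (B : choiceType) (V : eqType) (store : T -> V -> B -> Prop) (insp : T -> set B)
  (s : seq V) (ca cb : V -> bool) (e e' K : R) :
  (forall w p b1 b2, store w p b1 -> store w p b2 -> b1 = b2) ->
  (forall p, p \in s -> measurable [set w | found store insp w p]) ->
  (forall p, p \in s -> ca p -> ((1 - e)%:E <= mu [set w | found store insp w p])%E) ->
  0 < e' -> 6 * `|e| <= e' -> 0 < K ->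
  (\int[mu]_w ((count (fun p => ~~ cb p && `[< found store insp w p >]) s)%:R : R)%:E
     <= K%:E)%E ->
  ((2 / 3 : R)%:E <= mu [set w |
      ((1 - e') * (count ca s)%:R)%:E <= ans_hat store insp s w /\
      ans_hat store insp s w <= ((count cb s)%:R + 6 * K)%:E])%E.
Proof.
move=> uni Hm He e'0 ee' K0 HK.
set fnd := found store insp.
have Hm' : forall (c : V -> bool) p, p \in s -> c p -> measurable [set w | fnd w p].
  by move=> c p ps _; exact: Hm.
pose F := fun w => ((count (fun p => `[< fnd w p >]) s)%:R : R).
pose M := fun w => ((count (fun p => ca p && ~~ `[< fnd w p >]) s)%:R : R).
pose G := fun w => ((count (fun p => ~~ cb p && `[< fnd w p >]) s)%:R : R).
have mF : measurable_fun setT F := @count_meas _ _ R _ fnd (fun _ => true) true s (Hm' _).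
have mM : measurable_fun setT M := @count_meas _ _ R _ fnd ca false s (Hm' _).
have mG : measurable_fun setT G := @count_meas _ _ R _ fnd (fun p => ~~ cb p) true s (Hm' _).
set Na := (count ca s)%:R : R.
set Nb := (count cb s)%:R : R.
have -> : [set w | ((1 - e') * Na)%:E <= ans_hat store insp s w /\
      ans_hat store insp s w <= (Nb + 6 * K)%:E]%E =
    F @^-1` [set x | (1 - e') * Na <= x /\ x <= Nb + 6 * K].
  apply/seteqP; split => w /=; rewrite ans_hat_count //; exact: uni.
have mGood : measurable (F @^-1` [set x | (1 - e') * Na <= x /\ x <= Nb + 6 * K]).
  have := mF measurableT _ (measurable_itv `[(1 - e') * Na, Nb + 6 * K]).
  rewrite setTI; congr measurable; apply/seteqP; split => w /=; rewrite in_itv /=.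
    by move=> /andP.
  by move=> [-> ->].
have meas_ge : forall f : T -> R, measurable_fun setT f -> forall a, measurable [set w | a <= f w].
  move=> f mf a; have := mf measurableT _ (measurable_itv `[a, +oo[).
  rewrite setTI; congr measurable; apply/seteqP; split => w /=; rewrite in_itv /= andbT //.
have Fge : forall w, ((count (fun p => ca p && `[< fnd w p >]) s)%:R <= F w).
  by move=> w; rewrite ler_nat count_le_sub.
have NaE : forall w, Na = (count (fun p => ca p && `[< fnd w p >]) s)%:R + M w.
  by move=> w; rewrite /Na (@count_split _ ca (fun p => `[< fnd w p >]) s) natrD.
have Fle : forall w, F w <= Nb + G w.
  by move=> w; rewrite /F /Nb /G -natrD ler_nat count_le_add.
have [A1 [mA1 [hA1 incl1]]] : exists A1, measurable A1 /\ (mu A1 <= (1/6)%:E)%E /\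
    forall w, ~ A1 w -> (1 - e') * Na <= F w.
  have [Na0|NaP] := eqVneq (count ca s) 0%N.
    exists set0; split => //; split; first by rewrite measure0 lee_fin; lra.
    by move=> w _; rewrite /Na Na0 mulr0 ler0n.
  have Na0 : 0 < Na by rewrite /Na ltr0n lt0n.
  exists [set w | e' * Na <= M w]; split; first exact: meas_ge.
  split.
    have hm := @markov_R _ _ R mu M mM (e' * Na) (fun w => ler0n _ _) (mulr_gt0 e'0 Na0).
    have hi : (\int[mu]_w `|M w|%:E <= (Na * `|e|)%:E)%E.
      under eq_integral => w _ do rewrite ger0_norm ?ler0n //.
      apply: (@count_int _ _ R mu _ fnd ca s `|e| (Hm' ca)).
      move=> p ps cp; rewrite probability_setC; last exact: Hm.
      move: (He p ps cp) (probability_le1 mu (Hm p ps)).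
      case: (mu [set w | fnd w p]) => [r| |] //=; rewrite ?lee_fin => h1 h2.
      have := ler_norm e; lra.
    have := @markov_div R _ _ _ (mulr_gt0 e'0 Na0) (le_trans hm hi) (measure_ge0 _ _).
    move=> /le_trans; apply; rewrite lee_fin ler_pdivrMr ?mulr_gt0 //.
    have := normr_ge0 e; nra.
  move=> w /negP; rewrite -ltNge => hM.
  have := NaE w; have := Fge w; nra.
have [A2 [mA2 [hA2 incl2]]] : exists A2, measurable A2 /\ (mu A2 <= (1/6)%:E)%E /\
    forall w, ~ A2 w -> F w <= Nb + 6 * K.
  have K6 : 0 < 6 * K by rewrite mulr_gt0.
  exists [set w | 6 * K <= G w]; split; first exact: meas_ge.
  split.
    have hm := @markov_R _ _ R mu G mG (6 * K) (fun w => ler0n _ _) K6.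
    have hi : (\int[mu]_w `|G w|%:E <= K%:E)%E.
      by under eq_integral => w _ do rewrite ger0_norm ?ler0n //.
    have := @markov_div R _ _ _ K6 (le_trans hm hi) (measure_ge0 _ _).
    move=> /le_trans; apply; rewrite lee_fin ler_pdivrMr //; lra.
  move=> w /negP; rewrite -ltNge => hG.
  have := Fle w; lra.
apply: (@final_step _ _ _ mu _ _ _ mA1 mA2 mGood) => //.
by move=> w [/incl1 h1 /incl2 h2].
Qed.
Theorem lemma2 (R : realType) (alpha beta rho : R)
  (d : nat -> nat)
  (dT : nat -> measure_display) (T : forall n, measurableType (dT n))
  (P : forall n, probability (T n) R)
  (Bk : nat -> choiceType)
  (S : forall n, seq 'rV[R]_(d n))
  (store : forall n, T n -> 'rV[R]_(d n) -> Bk n -> Prop)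
  (insp : forall n, T n -> set (Bk n))
  (q : forall n, 'rV[R]_(d n)) :
  0 <= beta -> beta < alpha -> alpha < 1 ->
  (forall n, uniq (S n) /\ size (S n) = n /\ (forall p, p \in S n -> on_sphere p)) ->
  (* each point stored in at most one bucket *)
  (forall n w p b1 b2, store n w p b1 -> store n w p b2 -> b1 = b2) ->
  (forall n, on_sphere (q n)) ->
  (* the events "p lies in an inspected bucket" are events *)
  (forall n p, p \in S n -> measurable [set w | found (store n) (insp n) w p]) ->
  (* near points are found with probability 1 - o(1) *)
  (exists eps : nat -> R, eps n @[n --> \oo] --> 0 /\
     forall n p, p \in S n -> in_cap (q n) alpha p ->
       ((1 - eps n)%:E <= P n [set w | found (store n) (insp n) w p])%E) ->
  (* expected number of far points in inspected buckets is at most n^(rho+o(1)) *)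
  (exists delta : nat -> R, delta n @[n --> \oo] --> 0 /\
     forall n,
       (\int[P n]_w
          ((count (fun p => ~~ in_cap (q n) beta p &&
                             `[< found (store n) (insp n) w p >]) (S n))%:R : R)%:E
        <= ((n%:R : R) `^ (rho + delta n))%:E)%E) ->
  exists eps' delta' : nat -> R,
    eps' n @[n --> \oo] --> 0 /\ delta' n @[n --> \oo] --> 0 /\
    \forall n \near \oo,
      ((2 / 3 : R)%:E <=
       P n [set w |
         ((1 - eps' n) * (count (in_cap (q n) alpha) (S n))%:R)%:E
           <= ans_hat (store n) (insp n) (S n) w /\
         ans_hat (store n) (insp n) (S n) w
           <= ((count (in_cap (q n) beta) (S n))%:R
               + (n%:R : R) `^ (rho + delta' n))%:E])%E.
Proof.
move=> hb0 hba ha1 HS Huni Hq Hm [eps [heps He]] [delta [hdelta Hd]].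
exists (fun n => 6 * `|eps n| + harmonic n), (fun n => delta n + ln 6 / ln n%:R).
split; first exact: cvg_eps'.
split.
  have := cvgD hdelta (cvg_ln6 R); rewrite addr0; apply; exact: _.
near=> n.
have n1 : (1 < n)%N by near: n; exact: nbhs_infty_gt.
have n0 : 0 < n%:R :> R by rewrite ltr0n; lia.
have nz : n%:R != 0 :> R by rewrite gt_eqF.
have ln0 : ln (n%:R : R) != 0.
  by rewrite gt_eqF // ln_gt0 // ltr1n.
have hpow : (n%:R : R) `^ (rho + (delta n + ln 6 / ln n%:R)) = 6 * (n%:R `^ (rho + delta n)).
  rewrite addrA [LHS]powRD; last by apply/implyP => _.
  rewrite mulrC; congr (_ * _).
  rewrite /powR (negbTE nz) divfK // lnK // posrE; lra.
rewrite hpow.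
apply: one_n.
- exact: Huni.
- exact: Hm.
- exact: He.
- have := harmonic_gt0 (R:=R) n; have := normr_ge0 (eps n); lra.
- have := harmonic_gt0 (R:=R) n; lra.
- exact: powR_gt0.
- exact: Hd.
Unshelve. all: by end_near.
Qed.
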